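(* Let $q$ be a prime power, let $1 \le k \le n-1$, and let $S \subseteq \mathcal{L}_{n,k}$ be nonempty. Then \[ \Phi_{J_q(n,k)}(S) \le \frac{[n-k+1]_q}{q[n-k]_q}\left(1 - \frac{\mu_k(S)}{\mu_{k-1}(\partial S)}\right). \]
   Context: $\mathbb{F}_q$ is the finite field with $q$ elements; $\mathcal{L}_{n,k}$ is the set of $k$-dimensional linear subspaces of $(\mathbb{F}_q)^n$, and for $T \subseteq \mathcal{L}_{n,j}$, $\mu_j(T) = |T|/|\mathcal{L}_{n,j}|$. The shadow of $S \subseteq \mathcal{L}_{n,k}$ is $\partial S = \{B \in \mathcal{L}_{n,k-1} : \exists A \in S,\ B \subset A\}$. For real $x$, $[x]_q = \frac{q^x-1}{q-1}$. The Grassmann graph $J_q(n,k)$ has vertex set $\mathcal{L}_{n,k}$, with $A_1, A_2$ adjacent iff $\dim(A_1\cap A_2) = k-1$; it is $d$-regular with $d = q[k]_q[n-k]_q$. For a $d$-regular graph $G=(V,E)$ and nonempty $S \subseteq V$, $\Phi_G(S) = \frac{|E(S,\bar S)|}{d|S|}$, where $E(S,\bar S)$ is the set of edges between $S$ and $\bar S = V\setminus S$. *)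

(* Defs.v *)
(* Subspaces of F^n are represented canonically by square
   matrices A : 'M[F]_n with <<A>>%MS = A (row space representation). *)
From HB Require Import structures.
From mathcomp Require Import all_boot all_order all_algebra all_field.
Set Implicit Arguments. Unset Strict Implicit. Unset Printing Implicit Defensive.
Import Order.TTheory GRing.Theory Num.Theory.
Local Open Scope ring_scope.

Section Grassmann.
Variables (F : finFieldType) (n : nat).

Definition Lsub (k : nat) : {set 'M[F]_n} :=
  [set A : 'M[F]_n | (<<A>>%MS == A) && (\rank A == k)%N].

Definition shadow (k : nat) (S : {set 'M[F]_n}) : {set 'M[F]_n} :=
  [set B in Lsub k.-1 | [exists A in S, (B <= A)%MS]].

Definition mu (j : nat) (T : {set 'M[F]_n}) : rat :=
  (#|T|)%:R / (#|Lsub j|)%:R.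

Definition gadj (k : nat) (A1 A2 : 'M[F]_n) : bool :=
  (\rank (A1 :&: A2)%MS == k.-1)%N.

Definition cut_edges (k : nat) (S : {set 'M[F]_n}) : {set 'M[F]_n * 'M[F]_n} :=
  [set p | [&& p.1 \in S, p.2 \in Lsub k :\: S & gadj k p.1 p.2]].

End Grassmann.

Definition qint (q m : nat) : rat := ((q%:R ^+ m - 1) / (q%:R - 1)).

Definition gdeg (F : finFieldType) (n k : nat) : rat :=
  (#|F|)%:R * qint #|F| k * qint #|F| (n - k).

Definition Phi (F : finFieldType) (n k : nat) (S : {set 'M[F]_n}) : rat :=
  (#|cut_edges k S|)%:R / (gdeg F n k * (#|S|)%:R).

(* Main.v *)
Require Import Defs.
From HB Require Import structures.
From mathcomp Require Import all_boot all_order all_algebra all_field.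
From mathcomp Require Import mxabelem zify ring lra.
Set Implicit Arguments. Unset Strict Implicit.
Import Order.TTheory GRing.Theory Num.Theory.
Local Open Scope ring_scope.

Lemma sum_bool (T : finType) (A : {set T}) (P : pred T) :
  (\sum_(i in A) (P i : nat))%N = #|[set i in A | P i]|.
Proof.
rewrite -sum1_card big_mkcond [RHS]big_mkcond /=.
by apply: eq_bigr => i _; rewrite inE; case: (i \in A); case: (P i).
Qed.

Lemma dcount (T U : finType) (A : {set T}) (B : {set U}) (R : T -> U -> bool) :
  (\sum_(a in A) #|[set b in B | R a b]|)%N = (\sum_(b in B) #|[set a in A | R a b]|)%N.
Proof.
under eq_bigr => a _ do rewrite -sum_bool.
under [RHS]eq_bigr => b _ do rewrite -sum_bool.
exact: exchange_big.
Qed.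

Section Aux.
Variables (F : finFieldType) (n : nat).
Local Notation q := #|F|.

Lemma count_super (C : 'M[F]_n) j : \rank C = j -> (j < n)%N ->
  (#|[set B in Lsub F n j.+1 | (C <= B)%MS]| * (q^j.+1 - q^j) = q^n - q^j)%N.
Proof.
move=> rC ljn.
set X := [set B in Lsub F n j.+1 | (C <= B)%MS].
set V := ~: rowg C.
have cV : #|V| = (q ^ n - q ^ j)%N.
  by rewrite cardsCs setCK card_rowg rC card_mx mul1n.
have e1 : forall B, B \in X -> #|[set v in V | (v <= B)%MS]| = (q^j.+1 - q^j)%N.
  move=> B; rewrite inE => /andP[]; rewrite inE => /andP[_ /eqP rB] CB.
  have -> : [set v in V | (v <= B)%MS] = rowg B :\: rowg C.
    by apply/setP => v; rewrite !inE andbC.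
  rewrite cardsD card_rowg rB; congr (_ - _)%N.
  have -> : rowg B :&: rowg C = rowg C.
    by apply/setIidPr/subsetP => v; rewrite !inE => /submx_trans; apply.
  by rewrite card_rowg rC.
have e2 : forall v, v \in V -> #|[set B in X | (v <= B)%MS]| = 1%N.
  move=> v; rewrite !inE => nvC.
  have rCv : \rank (C + v)%MS = j.+1.
    apply/eqP; rewrite eqn_leq; apply/andP; split.
      rewrite -rC; apply: leq_trans (mxrank_adds_leqif _ _) _.
      by rewrite -[(\rank C).+1]addn1 leq_add2l rank_leq_row.
    rewrite -rC; have: (C < C + v)%MS.
      by rewrite ltmxE addsmxSl /=; apply: contra nvC; apply: submx_trans; apply: addsmxSr.
    by rewrite ltmxErank => /andP[].
  suff -> : [set B in X | (v <= B)%MS] = [set <<(C + v)%MS>>%MS] by rewrite cards1.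
  apply/setP => B; rewrite !inE; apply/idP/idP.
    case/andP => /andP [] /andP [/eqP gB /eqP rB] CB vB.
    apply/eqP; rewrite -gB; apply/genmxP.
    have sub : (C + v <= B)%MS by rewrite addsmx_sub CB.
    case: (mxrank_leqif_sup sub) => _; rewrite rCv rB eqxx => /esym BCv.
    by apply/andP; split.
  move/eqP => ->; rewrite genmx_id eqxx mxrank_gen rCv eqxx /= !genmxE.
  by rewrite addsmxSl addsmxSr.
rewrite -cV.
have -> : #|V| = (\sum_(v in V) #|[set B in X | (v <= B)%MS]|)%N.
  by rewrite -sum1_card; apply: eq_bigr => v vV; rewrite e2.
rewrite dcount (eq_bigr (fun _ => (q^j.+1 - q^j)%N)) ?sum_nat_const //.
Qed.


Definition perp (C : 'M[F]_n) : 'M[F]_n := <<kermx C^T>>%MS.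

Lemma rank_perp C : \rank (perp C) = (n - \rank C)%N.
Proof. by rewrite /perp mxrank_gen mxrank_ker mxrank_tr. Qed.

Lemma sub_perp m (D : 'M[F]_(m, n)) C : (D <= perp C)%MS = (D *m C^T == 0).
Proof. by rewrite /perp genmxE sub_kermx. Qed.

Lemma perp_gen C : <<perp C>>%MS = perp C.
Proof. exact: genmx_id. Qed.

Lemma perpS C D : (C <= D)%MS -> (perp D <= perp C)%MS.
Proof.
case/submxP => X ->; rewrite sub_perp trmx_mul mulmxA.
by move: (submx_refl (perp D)); rewrite sub_perp => /eqP ->; rewrite mul0mx.
Qed.

Lemma perpK C : (perp (perp C) == C)%MS.
Proof.
have sub : (C <= perp (perp C))%MS.
  rewrite sub_perp; have: perp C *m C^T == 0 by rewrite -sub_perp.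
  by move/eqP/(congr1 trmx); rewrite trmx_mul trmxK trmx0 => ->.
apply/andP; split => //.
case: (mxrank_leqif_sup sub) => _ <-.
by rewrite !rank_perp subKn // rank_leq_col.
Qed.

Lemma perpKc C : <<C>>%MS = C -> perp (perp C) = C.
Proof. by move=> gC; rewrite -perp_gen -[RHS]gC; apply/genmxP/perpK. Qed.

Lemma count_hyp (A : 'M[F]_n) k : \rank A = k -> (1 <= k <= n)%N ->
  #|[set C in Lsub F n k.-1 | (C <= A)%MS]| =
  #|[set D in Lsub F n (n - k).+1 | (perp A <= D)%MS]|.
Proof.
move=> rA /andP[k1 kn].
set X := [set C in Lsub F n k.-1 | (C <= A)%MS].
have inj : {in X &, injective perp}.
  move=> C1 C2; rewrite !inE => /andP[/andP[/eqP g1 _] _] /andP[/andP[/eqP g2 _] _] e.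
  by rewrite -(perpKc g1) -(perpKc g2) e.
rewrite -(card_in_imset inj); apply: eq_card => D; rewrite [in RHS]inE.
apply/imsetP/idP.
  case=> C; rewrite !inE => /andP[/andP[_ /eqP rC] CA] ->.
  rewrite perp_gen eqxx rank_perp rC perpS // andbT /=.
  apply/eqP; lia.
case/andP; rewrite inE => /andP[/eqP gD /eqP rD] AD.
exists (perp D); last by rewrite perpKc.
rewrite !inE perp_gen eqxx rank_perp rD /=; apply/andP; split.
  apply/eqP; lia.
apply: submx_trans (perpS AD) _.
by case/andP: (perpK A).
Qed.

End Aux.
Lemma count_rat (q X j m : nat) : (1 < q)%N ->
  (X * (q^j.+1 - q^j) = q^(j+m) - q^j)%N -> (X%:R : rat) = qint q m.
Proof.
move=> q1 h.
have q0 : (0 < q)%N by apply: ltnW.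
have h2 : (X * (q-1) = q^m - 1)%N.
  have qj : (0 < q ^ j)%N by rewrite expn_gt0 q0.
  apply/eqP; rewrite -(eqn_pmul2r qj) -mulnA mulnBl -expnS mul1n h.
  by rewrite mulnBl mul1n expnD mulnC.
rewrite /qint; apply: (@mulIf _ (q%:R - 1)).
  by rewrite subr_eq0 pnatr_eq1 gtn_eqF.
rewrite divfK; last by rewrite subr_eq0 pnatr_eq1 gtn_eqF.
move/(congr1 (fun x => x%:R : rat)): h2.
by rewrite natrM !natrB ?expn_gt0 ?q0 // natrX.
Qed.

Lemma qint_gt0 (q m : nat) : (1 < q)%N -> (0 < m)%N -> 0 < qint q m.
Proof.
move=> q1 m0; have q0 : (0 < q)%N by apply: ltnW.
rewrite /qint divr_gt0 // subr_gt0 ?ltr1n //.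
rewrite -natrX ltr1n; apply: leq_trans q1 _.
by rewrite -{1}(expn1 q); apply: leq_pexp2l.
Qed.

Theorem lemma4 (F : finFieldType) (n k : nat) (S : {set 'M[F]_n}) :
  (1 <= k)%N -> (k <= n.-1)%N ->
  S \subset @Lsub F n k -> S != set0 ->
  @Phi F n k S <= qint #|F| (n - k + 1) / ((#|F|)%:R * qint #|F| (n - k))
           * (1 - mu k S / mu k.-1 (shadow k S)).
Proof.
move=> k1 kn SL S0.
have q1 : (1 < #|F|)%N := card_finNzRing_gt1 F.
set q := #|F|.
set Lk := Lsub F n k. set Lk1 := Lsub F n k.-1. set D := shadow k S.
set N := qint q (n - k + 1). set K := qint q k. set Q := qint q (n - k).
have hN : forall C, C \in Lk1 -> (#|[set B in Lk | (C <= B)%MS]|%:R : rat) = N.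
  move=> C; rewrite inE => /andP[_ /eqP rC].
  have ltk : (k.-1 < n)%N by lia.
  move: (count_super rC ltk); rewrite prednK // => h.
  apply: (count_rat (j:=k.-1)) q1 _; rewrite prednK // h; congr (q ^ _ - _)%N; lia.
have hK : forall A, A \in Lk -> (#|[set C in Lk1 | (C <= A)%MS]|%:R : rat) = K.
  move=> A; rewrite inE => /andP[_ /eqP rA]; rewrite count_hyp //; last by lia.
  have rP : \rank (perp A) = (n - k)%N by rewrite rank_perp rA.
  have ltk : (n - k < n)%N by lia.
  move: (count_super rP ltk) => h.
  apply: (count_rat (j:=(n-k)%N)) q1 _; rewrite h; congr (q ^ _ - _)%N; lia.
have SLk : forall A, A \in S -> A \in Lk by move=> A AS; apply: (subsetP SL).
pose dC := fun C : 'M[F]_n => #|[set A in S | (C <= A)%MS]|.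
have hT : (\sum_(C in D) (dC C)%:R : rat) = #|S|%:R * K.
  rewrite -natr_sum /dC (dcount D S (fun C A => (C <= A)%MS)) natr_sum.
  rewrite (eq_bigr (fun _ => K)) ?sumr_const ?mulr_natl //.
  move=> A AS; rewrite -(hK A (SLk A AS)); congr (_%:R); apply: eq_card => C.
  rewrite !inE; case CA: (C <= A)%MS; rewrite ?andbF ?andbT //.
  have -> : [exists A0 in S, (C <= A0)%MS] by apply/existsP; exists A; rewrite AS CA.
  by rewrite andbT.
have hF : (#|Lk1|%:R : rat) * N = #|Lk|%:R * K.
  have := dcount Lk1 Lk (fun C A => (C <= A)%MS).
  move/(congr1 (fun x => x%:R : rat)); rewrite !natr_sum.
  rewrite (eq_bigr (fun _ => N)); last by move=> C CL; rewrite hN.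
  rewrite [X in _ = X -> _](eq_bigr (fun _ => K)); last by move=> A AL; rewrite hK.
  by rewrite !sumr_const !mulr_natl.
have hE : (#|cut_edges k S| <=
    \sum_(C in D) dC C * (#|[set B in Lk | (C <= B)%MS]| - dC C))%N.
  pose Cof := fun p : 'M[F]_n * 'M[F]_n => <<(p.1 :&: p.2)%MS>>%MS.
  rewrite -sum1_card (partition_big Cof (mem D)) /=; last first.
    move=> p; rewrite inE => /and3P[p1S _ /eqP adj].
    rewrite /D /shadow inE /Lk1 inE /Cof genmx_id eqxx mxrank_gen adj eqxx /=.
    by apply/existsP; exists p.1; rewrite p1S genmxE capmxSl.
  apply: leq_sum => C CD; rewrite sum1dep_card.
  set SC := [set A in S | (C <= A)%MS].
  set LC := [set B in Lk | (C <= B)%MS].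
  have -> : (#|LC| - dC C = #|LC :\: S|)%N.
    rewrite cardsD; congr (_ - _)%N; apply: eq_card => B; rewrite !inE.
    case BS: (B \in S); rewrite ?andbF ?andbT //.
    by have := SLk B BS; rewrite inE => ->.
  rewrite -cardsX; apply: subset_leq_card; apply/subsetP => p.
  rewrite !inE => /andP[/and3P[p1S p2 _] /eqP eC]; rewrite -eC.
  move: p2 => /and3P[p2S g2 r2].
  by rewrite p1S p2S g2 r2 /Cof !genmxE capmxSl capmxSr.
pose d := fun C => ((dC C)%:R : rat).
pose T := \sum_(C in D) d C.
pose S2 := \sum_(C in D) d C ^+ 2.
have hE' : (#|cut_edges k S|%:R : rat) <= N * T - S2.
  have -> : N * T - S2 =
      (\sum_(C in D) dC C * (#|[set B in Lk | (C <= B)%MS]| - dC C))%:R.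
    rewrite natr_sum /T /S2 mulr_sumr -sumrB; apply: eq_bigr => C CD.
    have CL : C \in Lk1 by move: CD; rewrite /D /shadow inE => /andP[].
    have le : (dC C <= #|[set B in Lk | (C <= B)%MS]|)%N.
      apply: subset_leq_card; apply/subsetP => A; rewrite !inE => /andP[AS ->].
      by have := SLk A AS; rewrite inE => ->.
    rewrite natrM natrB // hN // /d; ring.
  by rewrite ler_nat.
have s0 : (0 < #|S|)%N by rewrite card_gt0.
have Kgt0 : 0 < K by apply: qint_gt0.
have Ngt0 : 0 < N by apply: qint_gt0 => //; lia.
have Qgt0 : 0 < Q by apply: qint_gt0 => //; lia.
have qgt0 : (0 : rat) < q%:R by rewrite ltr0n; lia.
have sgt0 : (0 : rat) < #|S|%:R by rewrite ltr0n.
have Pgt0 : (0 : rat) < #|D|%:R.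
  rewrite ltr0n lt0n; apply/negP => /eqP /cards0_eq D0.
  move: hT; rewrite D0 big_set0 => /esym/eqP; rewrite mulf_eq0.
  by rewrite !gt_eqF.
have Lkgt0 : (0 : rat) < #|Lk|%:R.
  rewrite ltr0n; apply: leq_trans s0 _; exact: subset_leq_card.
have CS : T ^+ 2 / #|D|%:R <= S2.
  pose m := T / #|D|%:R.
  have h0 : 0 <= \sum_(C in D) (d C - m) ^+ 2 by apply: sumr_ge0 => C _; apply: sqr_ge0.
  have expand : \sum_(C in D) (d C - m) ^+ 2 = S2 - (T * m) *+ 2 + m ^+ 2 * #|D|%:R.
    rewrite (eq_bigr (fun C => d C ^+ 2 - (d C * m) *+ 2 + m ^+ 2)); last by move=> C _; rewrite sqrrB.
    by rewrite big_split /= sumrB sumrMnl -mulr_suml sumr_const mulr_natr.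
  rewrite -subr_ge0; move: h0; rewrite expand /m.
  have -> : S2 - T * (T / #|D|%:R) *+ 2 + (T / #|D|%:R) ^+ 2 * #|D|%:R = S2 - T ^+ 2 / #|D|%:R.
    by field; rewrite gt_eqF.
  by [].
have Lk1e : (#|Lk1|%:R : rat) = #|Lk|%:R * K / N.
  by rewrite -hF mulfK // gt_eqF.
rewrite /Phi /gdeg /mu -/q -/K -/Q -/Lk -/Lk1 -/D Lk1e.
have -> : N / (q%:R * Q) * (1 - #|S|%:R / #|Lk|%:R / (#|D|%:R / (#|Lk|%:R * K / N))) =
    (N * T - T ^+ 2 / #|D|%:R) / (q%:R * K * Q * #|S|%:R).
  rewrite /T hT; field.
  by rewrite !gt_eqF.
apply: ler_wpM2r.
  by rewrite invr_ge0; apply: ltW; rewrite mulr_gt0 // mulr_gt0 // mulr_gt0.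
apply: le_trans hE' _; rewrite lerD2l lerN2 //.
Qed.
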